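(* Let $\langle X\mid R\rangle$ be an $N$-homogeneous presentation with $X$ a finite totally ordered set. (1) For all integers $n\geq0$ and $m\geq l_N(n+2)$, $F_1^{n,m}=S_0^{(m)}\wedge\cdots\wedge S^{(m)}_{m-l_N(n+2)}$. (2) For all integers $n\geq1$ and $m\geq l_N(n+1)$, $F_2^{n,m}=S^{(m)}_{m-l_N(n+1)}\vee\cdots\vee S^{(m)}_{m-N}$.
   Context: $\mathbb{K}$ is a field, $N\geq2$, $X^{(m)}$ words of length $m$, $V=\mathbb{K}X$, $V^{\otimes m}=\mathbb{K}X^{(m)}$; $R\subset V^{\otimes N}$, $\overline R=\mathrm{span}(R)$, $I(R)_j=0$ ($j<N$), $I(R)_j=\sum_{i=0}^{j-N}V^{\otimes i}\otimes\overline R\otimes V^{\otimes j-N-i}$ ($j\geq N$). $X^{(m)}$ is lexicographically ordered, $\mathrm{lm}(f)$ the greatest word in $f\neq0$; elements of $R$ have leading coefficient $1$; a word is a normal form if it has no factor $\mathrm{lm}(f)$, $f\in R$; the presentation is reduced ($\mathrm{lm}(f)-f$ is a combination of normal-form words; $\mathrm{lm}(f)$ has no factor $\mathrm{lm}(g)$, $g\in R\setminus\{f\}$). $S\in\mathrm{End}(V^{\otimes N})$: $S(\mathrm{lm}(f))=\mathrm{lm}(f)-f$, $f\in R$, $S(w)=w$ otherwise (its kernel is $\overline R$). For $m\geq N$ and $0\leq i\leq m-N$, $S_i^{(m)}=\mathrm{id}_{V^{\otimes i}}\otimes S\otimes\mathrm{id}_{V^{\otimes m-N-i}}$. $l_N(2k)=kN$,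 $l_N(2k+1)=kN+1$; $J_1=V$, $J_2=\overline R$, $J_n=\bigcap_{i=0}^{l_N(n)-N}V^{\otimes i}\otimes\overline R\otimes V^{\otimes l_N(n)-N-i}$ ($n\geq3$). A reduction operator relatively to $X^{(m)}$ is a linear projector $T$ of $V^{\otimes m}$ with each $T(w)$ equal to $w$ or a combination of words $<w$; for each subspace $W$ there is a unique one with kernel $W$, $\theta_{X^{(m)}}^{-1}(W)$. Lattice: $T_1\wedge T_2=\theta^{-1}(\ker T_1+\ker T_2)$, $T_1\vee T_2=\theta^{-1}(\ker T_1\cap\ker T_2)$ (associative). For $m\geq l_N(n)$: $F_1^{n,m}=\theta_{X^{(m)}}^{-1}(I(R)_{m-l_N(n)}\otimes V^{\otimes l_N(n)})$; $F_2^{n,m}=\mathrm{id}$ if $m<l_N(n+1)$, else $\theta_{X^{(m)}}^{-1}(V^{\otimes m-l_N(n+1)}\otimes J_{n+1})$. *)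

(* Defs.v *)
From HB Require Import structures.
From mathcomp Require Import all_boot all_order all_algebra.
From Stdlib Require Import ClassicalEpsilon.
Set Implicit Arguments. Unset Strict Implicit. Unset Printing Implicit Defensive.
Import Order.TTheory GRing.Theory.
Local Open Scope ring_scope.

Definition lN (N n : nat) : nat := (n./2 * N + odd n)%N.

Section Presentation.
Variables (K : fieldType) (d : Order.disp_t) (X : finOrderType d) (N : nat).

(* V^{(x)m} = K X^{(m)} : K-valued functions on words of length m *)
Local Notation V m := {ffun m.-tuple X -> K^o}.

Fixpoint lexlt (s t : seq X) : bool :=
  match s, t with
  | x :: s', y :: t' => (x < y)%O || ((x == y) && lexlt s' t')
  | _, _ => false
  end.

Definition ew (m : nat) (w : m.-tuple X) : V m := [ffun u => (u == w)%:R].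
(* basis vector of a sequence (0 if it has the wrong length) *)
Definition eseq (m : nat) (s : seq X) : V m := [ffun u => (val u == s)%:R].

(* evaluation of f : V p on a sequence (0 if wrong length) *)
Definition feval (p : nat) (f : V p) (s : seq X) : K :=
  if insub s is Some t then f t else 0.

(* e_u (x) g (x) e_v, as an element of V m, g : V p, u of length i *)
Definition plc (m p i : nat) (u : seq X) (g : V p) (v : seq X) : V m :=
  [ffun w => if (take i (val w) == u) && (drop (i + p) (val w) == v)
             then feval g (take p (drop i (val w))) else 0].

(* V^{(x)i} (x) W (x) V^{(x) m-p-i} as a subspace of V^{(x)m}, W <= V^{(x)p} *)
Definition place (m i p : nat) (W : {vspace V p}) : {vspace V m} :=
  <<flatten [seq [seq plc m i (val u) f (val v) | f <- (vbasis W : seq (V p)),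
                   v <- enum (predT : pred ((m - p - i).-tuple X))] | u <- enum (predT : pred (i.-tuple X))]>>%VS.

Definition lm_of (f : V N) (w : N.-tuple X) : bool :=
  (f w != 0) && [forall u, (f u != 0) ==> ((u == w) || lexlt (val u) (val w))].

Variable R : seq (V N).

Definition normal_form (s : seq X) : bool :=
  all (fun g => ~~ [exists t : N.-tuple X, lm_of g t && infix (val t) s]) R.

Definition reduced_presentation : Prop :=
  (forall f, f \in R -> exists t, lm_of f t /\ f t = 1) /\
  (forall f, f \in R -> forall u, f u != 0 -> ~~ lm_of f u -> normal_form (val u)) /\
  (forall f g, f \in R -> g \in R -> f != g ->
     forall u v, lm_of f u -> lm_of g v -> ~~ infix (val u) (val v)).

Definition Rbar : {vspace V N} := <<R>>%VS.

Definition IR (j : nat) : {vspace V j} :=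
  if (j < N)%N then 0%VS
  else (\sum_(i < (j - N).+1) place j i Rbar)%VS.

(* J_n (J_1 = V, J_2 = Rbar, J_n = intersection for n >= 3; J_0 unused) *)
Definition J (n : nat) : {vspace V (lN N n)} :=
  if (n <= 1)%N then fullv
  else (\bigcap_(i < (lN N n - N).+1) place (lN N n) i Rbar)%VS.

Definition Sw (w : N.-tuple X) : V N :=
  match [seq f <- R | lm_of f w] with
  | f :: _ => ew w - f
  | [::] => ew w
  end.
Definition S : 'End(V N) := linfun (fun v : V N => \sum_w v w *: Sw w).

(* S_i^{(m)} = id_{V^{(x)i}} (x) S (x) id *)
Definition Sm (m i : nat) : 'End(V m) :=
  linfun (fun v : V m => \sum_w v w *:
     plc m i (take i (val w)) (S (eseq N (take N (drop i (val w)))))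
         (drop (i + N) (val w))).

Definition red_op (m : nat) (T : 'End(V m)) : Prop :=
  (T \o T = T)%VF /\
  forall w : m.-tuple X, T (ew w) = ew w \/
     forall u, T (ew w) u != 0 -> lexlt (val u) (val w).

(* theta^{-1}_{X^{(m)}}(W): the (unique) reduction operator with kernel W *)
Definition theta_inv (m : nat) (W : {vspace V m}) : 'End(V m) :=
  epsilon (inhabits \1%VF) (fun T => red_op T /\ lker T = W).

Definition rmeet (m : nat) (T1 T2 : 'End(V m)) : 'End(V m) :=
  theta_inv (lker T1 + lker T2)%VS.
Definition rjoin (m : nat) (T1 T2 : 'End(V m)) : 'End(V m) :=
  theta_inv (lker T1 :&: lker T2)%VS.

(* T_1 /\ ... /\ T_k (left-associated; the operations are associative) *)
Definition bigmeet (m : nat) (Ts : seq 'End(V m)) : 'End(V m) :=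
  if Ts is T :: Ts' then foldl (@rmeet m) T Ts' else \1%VF.
Definition bigjoin (m : nat) (Ts : seq 'End(V m)) : 'End(V m) :=
  if Ts is T :: Ts' then foldl (@rjoin m) T Ts' else \1%VF.

Definition F1 (n m : nat) : 'End(V m) :=
  theta_inv (place m 0 (IR (m - lN N n))).
Definition F2 (n m : nat) : 'End(V m) :=
  if (m < lN N n.+1)%N then \1%VF
  else theta_inv (place m (m - lN N n.+1) (J n.+1)).

End Presentation.

(* Main.v *)
Require Import Defs.
From HB Require Import structures.
From mathcomp Require Import all_boot all_order all_algebra zify.
From Stdlib Require Import ClassicalEpsilon.
Set Implicit Arguments. Unset Strict Implicit. Unset Printing Implicit Defensive.
Import Order.TTheory GRing.Theory.
Local Open Scope ring_scope.

Lemma linfunE' (K : fieldType) (aT rT : vectType K) (f : aT -> rT) :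
  linear f -> forall v, linfun f v = f v.
Proof.
move=> lf v.
pose F : {linear aT -> rT} := HB.pack f (GRing.isLinear.Build K aT rT *:%R f lf).
exact: (lfunE F v).
Qed.

Lemma fin_wf (T : finType) (r : rel T) : (forall x, ~~ r x x) -> transitive r ->
  forall P : T -> Prop, (forall w, (forall u, r u w -> P u) -> P w) -> forall w, P w.
Proof.
move=> irr tr P IH.
suff H : forall k w, (#|[pred u | r u w]| < k)%N -> P w.
  by move=> w; apply: (H _ w (ltnSn _)).
elim=> [//|k IHk] w Hw; apply: IH => u ruw; apply: IHk.
rewrite ltnS in Hw; apply: leq_trans Hw; apply: proper_card; apply/properP; split.
  by apply/subsetP => v; rewrite !inE => rvu; apply: tr rvu ruw.
by exists u; rewrite !inE ?ruw ?irr.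
Qed.

Section Words.
Variables (d : Order.disp_t) (X : finOrderType d).

Lemma lexlt_irr (s : seq X) : ~~ lexlt s s.
Proof. by elim: s => //= x s IH; rewrite ltxx eqxx /=. Qed.

Lemma lexlt_trans (a b c : seq X) : lexlt a b -> lexlt b c -> lexlt a c.
Proof.
elim: a b c => [|x a IH] [|y b] [|z c] //=.
case/orP=> [xy|/andP[/eqP-> ab]]; case/orP=> [yz|/andP[/eqP<- bc]].
- by rewrite (lt_trans xy yz).
- by rewrite xy.
- by rewrite yz.
- by rewrite eqxx (IH _ _ ab bc) orbT.
Qed.

Lemma lexlt_total (a b : seq X) : size a = size b -> a != b -> lexlt a b || lexlt b a.
Proof.
elim: a b => [|x a IH] [|y b] //= [sab]; rewrite eqseq_cons negb_and.
by case: (ltgtP x y) => //= _ /(IH _ sab).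
Qed.

Lemma lexlt_asym (a b : seq X) : lexlt a b -> ~~ lexlt b a.
Proof. by move=> ab; apply/negP => /(lexlt_trans ab); rewrite (negbTE (lexlt_irr _)). Qed.

Lemma lexlt_catl (u a b : seq X) : lexlt (u ++ a) (u ++ b) = lexlt a b.
Proof. by elim: u => //= x u ->; rewrite ltxx eqxx. Qed.

Lemma lexlt_catr (a b v v' : seq X) : size a = size b -> lexlt a b -> lexlt (a ++ v) (b ++ v').
Proof.
elim: a b => [|x a IH] [|y b] //= [sab]; case/orP=> [->//|/andP[-> ab]].
by rewrite (IH _ sab ab) orbT.
Qed.

Lemma lexlt_mid (u a b v : seq X) : size a = size b -> lexlt a b ->
  lexlt (u ++ a ++ v) (u ++ b ++ v).
Proof. by move=> sab ab; rewrite lexlt_catl; apply: lexlt_catr. Qed.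

End Words.

Section Vec.
Variables (K : fieldType) (d : Order.disp_t) (X : finOrderType d) (m : nat).
Local Notation V := {ffun m.-tuple X -> K^o}.
Local Notation e := (@ew K d X m).

Definition Lin (P : pred (m.-tuple X)) : {vspace V} := <<[seq e w | w <- enum P]>>%VS.

Lemma scoE (a b : K^o) : a *: b = a * b.
Proof. by []. Qed.

Lemma ewE (w u : m.-tuple X) : e w u = (u == w)%:R.
Proof. by rewrite ffunE. Qed.

Lemma ew_nz (w u : m.-tuple X) : e w u != 0 -> u = w.
Proof. by rewrite ewE; case: (eqVneq u w) => // _; rewrite eqxx. Qed.

Lemma decomp (x : V) : x = \sum_w x w *: e w.
Proof.
apply/ffunP => u; rewrite sum_ffunE (bigD1 u) //= big1 => [|w wu].
  by rewrite !ffunE eqxx addr0 /= scoE mulr1.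
by rewrite !ffunE eq_sym (negbTE wu) /= scoE mulr0.
Qed.

Lemma Lin_out (P : pred (m.-tuple X)) (x : V) u : x \in Lin P -> ~~ P u -> x u = 0.
Proof.
move=> /coord_span -> Pu; rewrite sum_ffunE big1 // => i _.
rewrite ffunE.
set t := (map_tuple _ _)`_i.
have : t \in [seq e w | w <- enum P].
  by rewrite /t; apply: (@mem_nth _ 0 (map_tuple [eta e] (enum_tuple P))); rewrite size_tuple.
case/mapP=> w; rewrite mem_enum => Pw ->.
rewrite ewE; case: (eqVneq u w) => [uw|uw]; first by rewrite uw in Pu; move/negP: Pu.

by rewrite /= scoE mulr0.
Qed.

Lemma Lin_in (P : pred (m.-tuple X)) (x : V) : (forall u, x u != 0 -> P u) -> x \in Lin P.
Proof.
move=> H; rewrite (decomp x); apply: memv_suml => w _.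
case: (eqVneq (x w) 0) => [->|/H Pw]; first by rewrite scale0r mem0v.
by apply: memvZ; apply: memv_span; apply: map_f; rewrite mem_enum.
Qed.

Definition wle (u w : m.-tuple X) := (u == w) || lexlt u w.

Lemma lead_ex (x : V) : x != 0 -> exists w, x w != 0 /\ forall u, x u != 0 -> wle u w.
Proof.
move=> /eqP nx.
have [w0 xw0] : exists w, x w != 0.
  case: (boolP [exists u, x u != 0]) => [/existsP//|/existsPn H].
  exfalso; apply: nx; apply/ffunP => u.
  by rewrite ffunE; apply/eqP; move: (H u); rewrite negbK.
pose r := fun a b : m.-tuple X => lexlt b a.
have irr : forall a, ~~ r a a by move=> a; apply: lexlt_irr.
have tr : transitive r by move=> b a c ab bc; apply: lexlt_trans bc ab.
move: w0 xw0; apply: (fin_wf irr tr) => w IH xw.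
case: (boolP [exists u, (x u != 0) && lexlt w u]) => [/existsP[u /andP[xu wu]]|/existsPn H].
  exact: IH u wu xu.
exists w; split => // u xu; rewrite /wle.
case: (eqVneq u w) => //= uw.
have := @lexlt_total _ _ u w (etrans (size_tuple u) (esym (size_tuple w))) uw; case/orP => // wu.
by move: (H u); rewrite xu wu.
Qed.

End Vec.

Section Red.
Variables (K : fieldType) (d : Order.disp_t) (X : finOrderType d) (m : nat).
Local Notation V := {ffun m.-tuple X -> K^o}.
Local Notation e := (@ew K d X m).

Lemma word_ind (P : m.-tuple X -> Prop) :
  (forall w : m.-tuple X, (forall u : m.-tuple X, lexlt u w -> P u) -> P w) -> forall w, P w.
Proof.
apply: (@fin_wf _ (fun a b : m.-tuple X => lexlt (val a) (val b))).
  by move=> a; apply: lexlt_irr.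
by move=> b a c; apply: lexlt_trans.
Qed.

Lemma supp_mem (Z : {vspace V}) (x : V) :
  (forall u, x u != 0 -> e u \in Z) -> x \in Z.
Proof.
move=> H; rewrite (decomp x); apply: memv_suml => u _.
case: (eqVneq (x u) 0) => [->|/H xu]; first by rewrite scale0r mem0v.
exact: memvZ.
Qed.

Definition LMb (W : {vspace V}) (w : m.-tuple X) :=
  ~~ ((W :&: Lin K (fun u => wle u w)) <= Lin K (fun u => lexlt u w))%VS.

Lemma LMbP (W : {vspace V}) (w : m.-tuple X) : reflect (exists2 g, g \in W & g w != 0 /\ forall u, g u != 0 -> wle u w)
  (LMb W w).
Proof.
rewrite /LMb; apply: (iffP idP) => [/subvPn[g] |[g gW [gw gle]]].
  rewrite memv_cap => /andP[gW gL] gnL; exists g => //; split.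
    apply: contra gnL => /eqP gw0; apply: Lin_in => u gu.
    have : wle u w by apply: contraNT gu => nle; rewrite (Lin_out gL nle).
    case: (eqVneq u w) gu => [->|uw _]; first by rewrite gw0 eqxx.
    by rewrite /wle (negbTE uw).
  by move=> u gu; apply: contraNT gu => nle; rewrite (Lin_out gL nle).
apply/subvPn; exists g; first by rewrite memv_cap gW; apply: Lin_in.
by apply: contra gw => /Lin_out ->; rewrite ?eqxx // lexlt_irr.
Qed.

Lemma LM_lead (W : {vspace V}) (g : V) : g \in W -> g != 0 ->
  exists w, [/\ LMb W w, g w != 0 & forall u, g u != 0 -> wle u w].
Proof.
move=> gW /lead_ex[w [gw gle]]; exists w; split => //.
by apply/LMbP; exists g.
Qed.

Definition UW (W : {vspace V}) := Lin K (fun w => ~~ LMb W w).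

Lemma capUW (W : {vspace V}) : (UW W :&: W = 0)%VS.
Proof.
apply/eqP; rewrite -subv0; apply/subvP => x; rewrite memv_cap memv0 => /andP[xU xW].
apply/negPn/negP => /(LM_lead xW)[w [LMw xw _]].
by move: xw; rewrite (Lin_out xU) ?eqxx // negbK.
Qed.

Lemma addUW (W : {vspace V}) (x : V) : x \in (UW W + W)%VS.
Proof.
apply: supp_mem => w _; elim/word_ind: w => w IH.
case: (boolP (LMb W w)) => [/LMbP[g gW [gw gle]]|nLM]; last first.
  by apply: (subvP (addvSl _ _)); apply: Lin_in => u /ew_nz ->.
have -> : e w = (g w)^-1 *: g + (e w - (g w)^-1 *: g) by rewrite addrC subrK.
apply: memvD; first by apply: (subvP (addvSr _ _)); apply: memvZ.
apply: supp_mem => u; rewrite !ffunE /= scoE.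
case: (eqVneq u w) => [->|uw]; first by rewrite mulVf // subrr eqxx.
rewrite /= sub0r oppr_eq0 mulf_eq0 negb_or => /andP[_ gu].
by apply: IH; move: (gle u gu); rewrite /wle (negbTE uw).
Qed.

Lemma red_supp (T : 'End(V)) (w u : m.-tuple X) : red_op T -> T (e w) u != 0 -> wle u w.
Proof.
case=> _ /(_ w) [->|H]; last by move/H => ?; rewrite /wle orbC; apply/orP; left.
by move/ew_nz ->; rewrite /wle eqxx.
Qed.

Lemma red_ex (W : {vspace V}) : exists T, red_op T /\ lker T = W.
Proof.
pose T := daddv_pi (UW W) W.
have cap := capUW W.
have cap' : (W :&: UW W = 0)%VS by rewrite capvC.
have add : forall x, T x + daddv_pi W (UW W) x = x.
  by move=> x; apply: daddv_pi_add => //; apply: addUW.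
exists T; split; last first.
  apply/vspaceP => x; rewrite memv_ker; apply/eqP/idP => [Tx|xW].
    by rewrite -(add x) Tx add0r memv_pi.
  by move: (add x); rewrite daddv_pi_id // => /(canRL (addrK x)); rewrite subrr.
split; first by apply/lfunP => x; rewrite comp_lfunE daddv_pi_proj.
move=> w; case: (boolP (LMb W w)) => LMw; last first.
  by left; apply: daddv_pi_id => //; apply: Lin_in => u /ew_nz ->.
right => u yu.
set y := T (e w) in yu.
have yU : y \in UW W by apply: memv_pi.
have hW : e w - y \in W.
  by rewrite -{1}(add (e w)) -/y addrC addKr memv_pi.
have nLMu : ~~ LMb W u by apply: contra yu => LMu; rewrite (Lin_out yU) ?eqxx // negbK.
have yw : y w = 0 by rewrite (Lin_out yU) // negbK.
have hw : (e w - y) w != 0 by rewrite !ffunE eqxx yw subr0 oner_eq0.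
have hnz : e w - y != 0 by apply: contraNneq hw => ->; rewrite ffunE.
have [w' [LMw' hw' hle]] := LM_lead hW hnz.
have ww' : w' = w.
  apply/eqP; apply: contraNT hw' => ww'; rewrite !ffunE (negbTE ww') /= sub0r oppr_eq0.
  by rewrite (Lin_out yU) // negbK.
subst w'.
have uw : u != w by apply: contraNneq nLMu => ->.
have : (e w - y) u != 0 by rewrite !ffunE (negbTE uw) /= sub0r oppr_eq0.
by move/hle; rewrite /wle (negbTE uw).
Qed.

Lemma red_in_U (T : 'End(V)) (W : {vspace V}) : red_op T -> lker T = W -> forall x, T x \in UW W.
Proof.
move=> rT kT.
suff H : forall w, T (e w) \in UW W.
  by move=> x; rewrite (decomp x) linear_sum; apply: memv_suml => w _;
     rewrite linearZ; apply: memvZ; apply: H.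
elim/word_ind => w IH.
have rT' := rT; case: rT' => TT /(_ w) [Tw|Tw].
  rewrite Tw; apply: Lin_in => u /ew_nz ->.
  apply/negP => /LMbP[g gW [gw gle]].
  have : T g = 0 by apply/eqP; rewrite -memv_ker kT.
  move/(congr1 (fun f : V => f w)); rewrite {1}(decomp g) linear_sum sum_ffunE.
  rewrite (bigD1 w) //= big1 => [|v vw]; last first.
    rewrite linearZ ffunE /= scoE; case: (eqVneq (g v) 0) => [->|gv]; first by rewrite mul0r.
    have ltv : lexlt v w by move: (gle v gv); rewrite /wle (negbTE vw).
    case: (eqVneq (T (e v) w) 0) => [->|/(red_supp rT)]; first by rewrite mulr0.
    rewrite /wle; case: (eqVneq w v) => [wv|_] /=; first by rewrite wv eqxx in vw.
    by move/(lexlt_asym); rewrite ltv.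
  rewrite linearZ ffunE /= Tw ewE eqxx scoE mulr1 addr0 ffunE => gw0; by rewrite gw0 eqxx in gw.
have -> : T (e w) = T (T (e w)) by rewrite -comp_lfunE TT.
rewrite (decomp (T (e w))) linear_sum; apply: memv_suml => u _.
rewrite linearZ /=; case: (eqVneq (T (e w) u) 0) => [->|/Tw ltu]; first by rewrite scale0r mem0v.
by apply: memvZ; apply: IH.
Qed.

Lemma red_uniq (T1 T2 : 'End(V)) : red_op T1 -> red_op T2 -> lker T1 = lker T2 -> T1 = T2.
Proof.
move=> r1 r2 k12; apply/lfunP => x; apply/eqP; rewrite -subr_eq0 -memv0.
have <- := capUW (lker T1).
have ker : forall T : 'End(V), red_op T -> x - T x \in lker T.
  move=> T [TT _]; rewrite memv_ker linearB /= -comp_lfunE TT subrr //.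
rewrite memv_cap; apply/andP; split.
  by apply: memvB; apply: red_in_U; rewrite // k12.
have -> : T1 x - T2 x = (x - T2 x) - (x - T1 x) by rewrite opprB [RHS]addrC addrA subrK.
by apply: memvB; [rewrite k12|]; apply: ker.
Qed.

End Red.

Section Theta.
Variables (K : fieldType) (d : Order.disp_t) (X : finOrderType d) (m : nat).
Local Notation V := {ffun m.-tuple X -> K^o}.

Lemma theta_invP (W : {vspace V}) : red_op (theta_inv W) /\ lker (theta_inv W) = W.
Proof.
rewrite /theta_inv.
apply: (epsilon_spec (inhabits _) (fun T : 'End(V) => red_op T /\ lker T = W)).
exact: red_ex.
Qed.

Lemma theta_inv_lker (T : 'End(V)) : red_op T -> theta_inv (lker T) = T.
Proof.
move=> rT; have [r k] := theta_invP (lker T); exact: red_uniq.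
Qed.

Lemma bigmeet_eq (T : 'End(V)) Ts : red_op T ->
  bigmeet (T :: Ts) = theta_inv (\sum_(S <- T :: Ts) lker S)%VS.
Proof.
move=> rT /=.
have fk : forall (T0 : 'End(V)) (Ts : seq 'End(V)), lker (foldl (@rmeet _ _ _ m) T0 Ts) = (lker T0 + \sum_(S <- Ts) lker S)%VS.
  move=> T0 Ts0; elim: Ts0 T0 => [|T1 Ts1 IH] T0 /=; first by rewrite big_nil addv0.
  by rewrite IH big_cons addvA (proj2 (theta_invP _)).
have fr : forall (T0 : 'End(V)) (Ts : seq 'End(V)), red_op T0 -> red_op (foldl (@rmeet _ _ _ m) T0 Ts).
  move=> T0 Ts0; elim: Ts0 T0 => [|T1 Ts1 IH] T0 //= _.
  by apply: IH; apply: (proj1 (theta_invP _)).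
by rewrite -(theta_inv_lker (fr T Ts rT)) fk big_cons.
Qed.

Lemma bigjoin_eq (T : 'End(V)) Ts : red_op T ->
  bigjoin (T :: Ts) = theta_inv (\bigcap_(S <- T :: Ts) lker S)%VS.
Proof.
move=> rT /=.
have fk : forall (T0 : 'End(V)) (Ts : seq 'End(V)), lker (foldl (@rjoin _ _ _ m) T0 Ts) = (lker T0 :&: \bigcap_(S <- Ts) lker S)%VS.
  move=> T0 Ts0; elim: Ts0 T0 => [|T1 Ts1 IH] T0 /=; first by rewrite big_nil capvf.
  by rewrite IH big_cons capvA (proj2 (theta_invP _)).
have fr : forall (T0 : 'End(V)) (Ts : seq 'End(V)), red_op T0 -> red_op (foldl (@rjoin _ _ _ m) T0 Ts).
  move=> T0 Ts0; elim: Ts0 T0 => [|T1 Ts1 IH] T0 //= _.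
  by apply: IH; apply: (proj1 (theta_invP _)).
by rewrite -(theta_inv_lker (fr T Ts rT)) fk big_cons.
Qed.

End Theta.

Section Place.
Variables (K : fieldType) (d : Order.disp_t) (X : finOrderType d).
Local Notation V m := {ffun m.-tuple X -> K^o}.

Lemma feval_tuple m (x : V m) (t : m.-tuple X) : feval x (val t) = x t.
Proof. by rewrite /feval valK. Qed.

Lemma feval_out m (x : V m) (s : seq X) : size s != m -> feval x s = 0.
Proof. by move=> hs; rewrite /feval insubN. Qed.

Lemma feval_ffun m (F : seq X -> K^o) (s : seq X) : size s = m ->
  feval ([ffun t : m.-tuple X => F (val t)] : V m) s = F s.
Proof.
move=> hs; rewrite /feval; case: insubP => [t _ <-|]; first by rewrite ffunE.
by rewrite hs eqxx.
Qed.

Lemma feval_lin m (s : seq X) : linear (fun x : V m => (feval x s : K^o)).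
Proof.
move=> a x y; rewrite /feval; case: insubP => [t _ _|_]; first by rewrite !ffunE.
by rewrite /= scoE mulr0 addr0.
Qed.

Definition slice m p (u v : seq X) (x : V m) : V p :=
  [ffun t : p.-tuple X => feval x (u ++ val t ++ v)].

Arguments slice {m} p u v x.

Lemma slice_lin m p u v : linear (@slice m p u v).
Proof.
move=> a x y; apply/ffunP => t; rewrite !ffunE.
exact: (feval_lin (u ++ val t ++ v) a x y).
Qed.

Definition sl m p u v : {linear V m -> V p} :=
  HB.pack (@slice m p u v) (GRing.isLinear.Build K (V m) (V p) *:%R _ (@slice_lin m p u v)).
Arguments sl {m} p u v : simpl never.

Lemma slE m p u v (x : V m) (t : p.-tuple X) : sl p u v x t = feval x (u ++ val t ++ v).
Proof. by rewrite /= ffunE. Qed.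

Lemma plc_lin m p i u v : linear (fun g : V p => plc m i u g v).
Proof.
move=> a x y; apply/ffunP => w; rewrite !ffunE.
case: ifP => _; last by rewrite /= scoE mulr0 addr0.
exact: (feval_lin _ a x y).
Qed.

Definition plcL m p i u v : {linear V p -> V m} :=
  HB.pack (fun g : V p => plc m i u g v)
    (GRing.isLinear.Build K (V p) (V m) *:%R _ (@plc_lin m p i u v)).
Arguments plcL m {p} i u v : simpl never.

Lemma plcLE m p i u v (g : V p) : plcL m i u v g = plc m i u g v.
Proof. by []. Qed.

Lemma sl_plc m p i (u v u' v' : seq X) (g : V p) :
  size u = i -> size v = (m - p - i)%N -> (i + p <= m)%N ->
  sl p u v (plc m i u' g v') = if (u == u') && (v == v') then g else 0.
Proof.
move=> su sv hm; apply/ffunP => t; rewrite slE.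
have st : size (u ++ val t ++ v) = m by rewrite !size_cat size_tuple su sv; lia.
rewrite (_ : u ++ val t ++ v = val (Tuple (introT eqP st))) // feval_tuple ffunE /=.
have e1 : take i (u ++ val t ++ v) = u by rewrite take_size_cat.
have e2 : drop (i + p) (u ++ val t ++ v) = v.
  by rewrite addnC -drop_drop (drop_size_cat _ su) (drop_size_cat _ (size_tuple t)).
have e3 : take p (drop i (u ++ val t ++ v)) = val t.
  by rewrite (drop_size_cat _ su) (take_size_cat _ (size_tuple t)).
rewrite e1 e2 e3; case: ifP => _; last by rewrite ffunE.
by rewrite feval_tuple.
Qed.

Lemma slK m p u v (x : V m) : sl p u v x = [ffun t : p.-tuple X => feval x (u ++ val t ++ v)].
Proof. by []. Qed.

Lemma split3 (s : seq X) i p : s = take i s ++ take p (drop i s) ++ drop (i + p) s.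
Proof. by rewrite addnC -drop_drop !cat_take_drop. Qed.

Lemma size_mid m (w : m.-tuple X) i p : (i + p <= m)%N -> size (take p (drop i w)) = p.
Proof. by move=> h; rewrite size_take size_drop size_tuple; apply/minn_idPl; lia. Qed.

Lemma sl_eval m p i (y : V m) (w : m.-tuple X) : (i + p <= m)%N ->
  y w = feval (sl p (take i w) (drop (i + p) w) y) (take p (drop i w)).
Proof.
move=> h; rewrite slK (feval_ffun (fun s => feval y (take i w ++ s ++ drop (i + p) w))).
  by rewrite -split3 feval_tuple.
exact: size_mid.
Qed.

Lemma sl_inj m p i (y z : V m) : (i + p <= m)%N ->
  (forall u v, size u = i -> size v = (m - p - i)%N -> sl p u v y = sl p u v z) -> y = z.
Proof.
move=> h H; apply/ffunP => w; rewrite (sl_eval y w h) (sl_eval z w h) H //.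
  by rewrite size_take size_tuple; apply/minn_idPl; lia.
by rewrite size_drop size_tuple; lia.
Qed.

Lemma ew_plc m p i (w : m.-tuple X) : (i + p <= m)%N ->
  ew K w = plc m i (take i w) (eseq K p (take p (drop i w))) (drop (i + p) w).
Proof.
move=> h; apply/ffunP => w'; rewrite !ffunE.
rewrite (feval_ffun (fun s => ((s == take p (drop i w))%:R : K^o))); last exact: size_mid.
case: (eqVneq w' w) => [->|ne]; first by rewrite !eqxx.
case: ifP => // /andP[/eqP A /eqP B]; case: eqP => // C; case/eqP: ne.
by apply: val_inj; rewrite /= (split3 w' i p) (split3 w i p) A B C.
Qed.

Lemma plc_mem m p i (W : {vspace V p}) (f : V p) (u : i.-tuple X) (v : (m - p - i).-tuple X) :
  f \in W -> plc m i (val u) f (val v) \in place m i W.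
Proof.
move=> fW; rewrite (coord_vbasis fW) -plcLE linear_sum; apply: memv_suml => k _.
rewrite linearZ; apply: memvZ; rewrite plcLE; apply: memv_span.
apply/flatten_mapP; exists u; rewrite ?mem_enum //; apply/allpairsP.
exists ((vbasis W)`_k, v); rewrite /= mem_enum; split => //.
by apply: mem_nth; rewrite size_tuple.
Qed.

Lemma place_char m p i (W : {vspace V p}) (x : V m) : (i + p <= m)%N ->
  x \in place m i W <-> forall u v, size u = i -> size v = (m - p - i)%N -> sl p u v x \in W.
Proof.
move=> h; split.
  move=> xP u v su sv; move: xP; rewrite /place => /(@coord_span _ _ _ (in_tuple _)) ->.
  rewrite linear_sum; apply: memv_suml => k _; rewrite linearZ; apply: memvZ.
  set g := (in_tuple _)`_k.
  have : g \in flatten [seq [seq plc m i (val u0) f (val v0) | f <- (vbasis W : seq (V p)),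
                   v0 <- enum (predT : pred ((m - p - i).-tuple X))] | u0 <- enum (predT : pred (i.-tuple X))].
    exact: (mem_nth _ (ltn_ord k)).
  case/flatten_mapP => u' _ /allpairsP [[f v'] [/= fB _ ->]].
  change (sl p u v (plc m i u' f v') \in W); rewrite sl_plc //; case: ifP => _; last exact: mem0v.
  exact: vbasis_mem.
move=> H.
have -> : x = \sum_(u' : i.-tuple X) \sum_(v' : (m - p - i).-tuple X)
               plc m i (val u') (sl p (val u') (val v') x) (val v').
  apply: (@sl_inj m p i) => // u v su sv.
  have su' : size u == i by apply/eqP.
  have sv' : size v == (m - p - i)%N by apply/eqP.
  rewrite linear_sum (eq_bigr (fun u' : i.-tuple X => if u' == Tuple su' then
      sl p u v (\sum_(v' : (m - p - i).-tuple X) plc m i u (sl p u (val v') x) (val v')) else 0)); last first.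
    move=> u' _; case: eqP => [-> //|ne]; rewrite linear_sum big1 // => v' _.
    rewrite sl_plc // ifN //.
    by apply/negP => /andP[/eqP e _]; apply: ne; apply: val_inj.
  rewrite -big_mkcond big_pred1_eq linear_sum.
  rewrite (eq_bigr (fun v' : (m - p - i).-tuple X => if v' == Tuple sv' then sl p u v x else 0)); last first.
    move=> v' _; rewrite sl_plc // eqxx /=; case: (eqVneq v' (Tuple sv')) => [-> /=|ne]; first by rewrite eqxx. rewrite ifN //.
    by apply/negP => /eqP e; move/eqP: ne; apply; apply: val_inj.
  by rewrite -big_mkcond big_pred1_eq.
apply: memv_suml => u' _; apply: memv_suml => v' _; apply: plc_mem.
by apply: H; rewrite size_tuple.
Qed.

Lemma sl_sl L m p (u v u' v' : seq X) (x : V m) : (size u' + p + size v')%N = L ->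
  sl p u' v' (sl L u v x) = sl p (u ++ u') (v' ++ v) x.
Proof.
move=> hL; apply/ffunP => t; rewrite !slE slK (feval_ffun (fun s => feval x (u ++ s ++ v))).
  by rewrite -!catA.
by rewrite !size_cat size_tuple addnA.
Qed.

Lemma place_nest m L a i p (W : {vspace V p}) : (a + L <= m)%N -> (i + p <= L)%N ->
  place m a (place L i W) = place m (a + i) W.
Proof.
move=> h1 h2; have h3 : (a + i + p <= m)%N by lia.
apply/vspaceP => x; apply/idP/idP.
  move/(place_char _ _ h1) => H; apply/(place_char _ _ h3) => U V' sU sV.
  have t1 : size (take (L - p - i) V') = (L - p - i)%N by apply: size_takel; lia.
  have t2 : size (take a U) = a by apply: size_takel; lia.
  have d1 : size (drop (L - p - i) V') = (m - L - a)%N by rewrite size_drop; lia.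
  have d2 : size (drop a U) = i by rewrite size_drop; lia.
  have e : sl p U V' x = sl p (drop a U) (take (L - p - i) V') (sl L (take a U) (drop (L - p - i) V') x).
    by rewrite sl_sl ?cat_take_drop // d2 t1; lia.
  rewrite e; have := H _ _ t2 d1; move/(place_char _ _ h2); apply => //.
move/(place_char _ _ h3) => H; apply/(place_char _ _ h1) => u v su sv.
apply/(place_char _ _ h2) => u' v' su' sv'; rewrite sl_sl; last by lia.
by apply: H; rewrite size_cat; lia.
Qed.

Lemma memv_bigcap_seq m (r : seq nat) (F : nat -> {vspace V m}) (x : V m) :
  x \in (\bigcap_(k <- r) F k)%VS <-> forall k, k \in r -> x \in F k.
Proof.
elim: r => [|k r IH]; first by rewrite big_nil memvf; split.
rewrite big_cons memv_cap; split.
  by case/andP => xk /IH H k'; rewrite inE; case/orP => [/eqP->//|]; apply: H.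
move=> H; rewrite H ?mem_head //=; apply/IH => k' k'r; apply: H.
by rewrite inE k'r orbT.
Qed.

Lemma place_cap m i p (r : seq nat) (F : nat -> {vspace V p}) : (i + p <= m)%N ->
  place m i (\bigcap_(k <- r) F k) = (\bigcap_(k <- r) place m i (F k))%VS.
Proof.
move=> h; apply/vspaceP => x; apply/idP/idP.
  move/(place_char _ _ h) => H; apply/memv_bigcap_seq => k kr.
  apply/(place_char _ _ h) => u v su sv.
  by have /memv_bigcap_seq := H u v su sv; apply.
move/memv_bigcap_seq => H; apply/(place_char _ _ h) => u v su sv.
apply/memv_bigcap_seq => k kr; have /(place_char _ _ h) := H k kr; exact.
Qed.

Lemma place_gen m i p (W : {vspace V p}) (Z : {vspace V m}) :
  (forall (u : i.-tuple X) (v : (m - p - i).-tuple X) f, f \in W ->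
     plc m i (val u) f (val v) \in Z) -> (place m i W <= Z)%VS.
Proof.
move=> H; apply/span_subvP => y /flatten_mapP[u _ /allpairsP[[f v] [/= fB _ ->]]].
by apply: H; apply: vbasis_mem.
Qed.

Lemma place_mono m i p (W1 W2 : {vspace V p}) : (W1 <= W2)%VS ->
  (place m i W1 <= place m i W2)%VS.
Proof.
move=> s12; apply: place_gen => u v f fW; apply: plc_mem.
exact: (subvP s12).
Qed.

Lemma place_add m i p (A B : {vspace V p}) :
  place m i (A + B) = (place m i A + place m i B)%VS.
Proof.
apply: subv_anti; apply/andP; split.
  apply: place_gen => u v f /memv_addP[a aA [b bB ->]].
  by rewrite -plcLE linearD; apply: memv_add; apply: plc_mem.
by rewrite subv_add !place_mono ?addvSl ?addvSr.
Qed.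

Lemma place0 m i p : place m i (0 : {vspace V p}) = 0%VS.
Proof.
apply: subv_anti; rewrite sub0v andbT; apply: place_gen => u v f.
rewrite memv0 => /eqP ->; rewrite -plcLE linear0 mem0v //.
Qed.

Lemma place_sum m i p (r : seq nat) (F : nat -> {vspace V p}) :
  place m i (\sum_(k <- r) F k) = (\sum_(k <- r) place m i (F k))%VS.
Proof.
elim: r => [|k r IH]; first by rewrite !big_nil place0.
by rewrite !big_cons place_add IH.
Qed.

End Place.
Arguments sl {K d X m} p u v : simpl never.
Arguments plcL {K d X} m {p} i u v : simpl never.
Arguments slice {K d X m} p u v x.
Lemma slice_sl (K : fieldType) d (X : finOrderType d) m p (u v : seq X) (x : {ffun m.-tuple X -> K^o}) :
  slice p u v x = sl p u v x.
Proof. by []. Qed.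

Section SOp.
Variables (K : fieldType) (d : Order.disp_t) (X : finOrderType d).
Local Notation V m := {ffun m.-tuple X -> K^o}.

Lemma lin_sum_coef m n (G : m.-tuple X -> V n) :
  linear (fun v : V m => \sum_w v w *: G w).
Proof.
move=> a x y; rewrite scaler_sumr -big_split; apply: eq_bigr => w _.
by rewrite !ffunE scalerDl scalerA.
Qed.

Lemma sum_ew m n (G : m.-tuple X -> V n) (w : m.-tuple X) :
  \sum_u ew K w u *: G u = G w.
Proof.
rewrite (bigD1 w) //= big1 ?addr0; first by rewrite ewE eqxx scale1r.
by move=> u uw; rewrite ewE (negbTE uw) scale0r.
Qed.

Variables (N : nat) (R : seq (V N)).
Hypothesis rp : reduced_presentation R.

Lemma SE (x : V N) : S R x = \sum_w x w *: Sw R w.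
Proof. by rewrite /S linfunE' //; apply: lin_sum_coef. Qed.

Lemma S_ew (w : N.-tuple X) : S R (ew K w) = Sw R w.
Proof. by rewrite SE sum_ew. Qed.

Lemma lm_unique (f : V N) t t' : lm_of f t -> lm_of f t' -> t = t'.
Proof.
case/andP=> ft /forallP H1; case/andP=> ft' /forallP H2.
move: (H1 t') (H2 t); rewrite ft ft' /=.
case: (eqVneq t' t) => [->//|ne] /= l1.
move=> l2.
by move: (lexlt_asym l1); rewrite l2.
Qed.

Lemma Sw_cases (w : N.-tuple X) : Sw R w = ew K w \/
  exists f, [/\ f \in R, lm_of f w & Sw R w = ew K w - f].
Proof.
rewrite /Sw; case E: [seq f <- R | lm_of f w] => [|f s]; [by left | right].
have : f \in [seq f <- R | lm_of f w] by rewrite E mem_head.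
by rewrite mem_filter => /andP[lm fR]; exists f.
Qed.

Lemma Sw_nf (w : N.-tuple X) : (forall f, f \in R -> ~~ lm_of f w) -> Sw R w = ew K w.
Proof.
move=> H; rewrite /Sw; case E: [seq f <- R | lm_of f w] => [//|f s].
have : f \in [seq f <- R | lm_of f w] by rewrite E mem_head.
by rewrite mem_filter => /andP[lm fR]; move: (H f fR); rewrite lm.
Qed.

Lemma Sw_lm (f : V N) (w : N.-tuple X) : f \in R -> lm_of f w -> Sw R w = ew K w - f.
Proof.
move=> fR lmf; rewrite /Sw; case E: [seq f <- R | lm_of f w] => [|g s].
  have : f \in [seq f <- R | lm_of f w] by rewrite mem_filter lmf fR.
  by rewrite E.
have : g \in [seq f <- R | lm_of f w] by rewrite E mem_head.
rewrite mem_filter => /andP[lmg gR].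
case: (eqVneq f g) => [->//|ne].
have [_ [_ H3]] := rp; move: (H3 f g fR gR ne w w lmf lmg).
by rewrite infix_refl.
Qed.

Lemma lead1 (f : V N) t : f \in R -> lm_of f t -> f t = 1.
Proof.
move=> fR lmt; have [H1 _] := rp; have [t0 [lm0 f0]] := H1 f fR.
by rewrite (lm_unique lmt lm0).
Qed.

Lemma S_R (f : V N) : f \in R -> S R f = 0.
Proof.
move=> fR; have [H1 [H2 _]] := rp; have [t [lmt ft]] := H1 f fR.
rewrite SE (bigD1 t) //= (Sw_lm fR lmt) ft scale1r.
rewrite (eq_bigr (fun w => f w *: ew K w)); last first.
  move=> w wt; case: (eqVneq (f w) 0) => [->|fw]; first by rewrite !scale0r.
  congr (_ *: _); apply: Sw_nf => g gR.
  have nlm : ~~ lm_of f w by apply: contra wt => lmw; rewrite (lm_unique lmw lmt).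
  have := H2 f fR w fw nlm; rewrite /normal_form => /allP /(_ g gR).
  by apply: contra => lmg; apply/existsP; exists w; rewrite lmg infix_refl.
have hd := decomp f; rewrite (bigD1 t) //= ft scale1r in hd.
have hs : \sum_(w | w != t) f w *: ew K w = f - ew K t.
  by rewrite [in RHS]hd addrAC subrr add0r.
by rewrite hs -opprB addNr.
Qed.

Lemma lker_S : lker (S R) = Rbar R.
Proof.
apply/vspaceP => x; rewrite memv_ker; apply/eqP/idP => [Sx|xR].
  have e1 : x - S R x = \sum_w x w *: (ew K w - Sw R w).
    rewrite SE {1}(decomp x) -sumrB; apply: eq_bigr => w _.
    by rewrite scalerBr.
  rewrite Sx subr0 in e1; rewrite e1.
  apply: memv_suml => w _; apply: memvZ.
  case: (Sw_cases w) => [->|[f [fR _ ->]]]; first by rewrite subrr mem0v.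
  by rewrite opprB addrC subrK; apply: memv_span.
move: xR; rewrite /Rbar => /(@coord_span _ _ _ (in_tuple _)) ->.
rewrite linear_sum big1 // => k _; rewrite linearZ /=.
by rewrite S_R ?scaler0 //; exact: (mem_nth _ (ltn_ord k)).
Qed.

Lemma S_idem (x : V N) : S R (S R x) = S R x.
Proof.
rewrite [S R x]SE linear_sum; apply: eq_bigr => w _; rewrite linearZ /=.
congr (_ *: _); case: (Sw_cases w) => [E|[f [fR _ E]]]; rewrite E; first by rewrite S_ew E.
by rewrite linearB /= S_ew S_R // subr0 E.
Qed.

Lemma SmE m i (x : V m) : Sm R m i x = \sum_w x w *:
     plc m i (take i (val w)) (S R (eseq K N (take N (drop i (val w))))) (drop (i + N) (val w)).
Proof. by rewrite /Sm linfunE' //; apply: lin_sum_coef. Qed.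

Lemma sl_Sm m i (u v : seq X) (x : V m) : (i + N <= m)%N -> size u = i -> size v = (m - N - i)%N ->
  sl N u v (Sm R m i x) = S R (sl N u v x).
Proof.
move=> h su sv.
rewrite SmE {2}(decomp x) !linear_sum; apply: eq_bigr => w _; rewrite !linearZ /=.
congr (_ *: _); rewrite (ew_plc K w h) !slice_sl !sl_plc //.
by case: ifP => _; rewrite ?linear0.
Qed.

Lemma lker_Sm m i : (i + N <= m)%N -> lker (Sm R m i) = place m i (Rbar R).
Proof.
move=> h; apply/vspaceP => x; rewrite memv_ker; apply/eqP/idP => [Sx|xP].
  apply/(place_char _ _ h) => u v su sv; rewrite -lker_S memv_ker -(@sl_Sm m i) // Sx.
  by rewrite linear0.
apply: (sl_inj h) => u v su sv; rewrite sl_Sm // linear0.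
by apply/eqP; rewrite -memv_ker lker_S; move/(place_char _ _ h): xP; apply.
Qed.

Lemma eseq_ew (s : seq X) (hs : size s == N) : eseq K N s = ew K (Tuple hs).
Proof. by apply/ffunP => u; rewrite !ffunE. Qed.

Lemma red_Sm m i : (i + N <= m)%N -> red_op (Sm R m i).
Proof.
move=> h; split.
  apply/lfunP => x; rewrite comp_lfunE; apply: (sl_inj h) => u v su sv.
  by rewrite !sl_Sm // S_idem.
move=> w.
have hs : size (take N (drop i (val w))) == N by apply/eqP; apply: size_mid.
set t := Tuple hs.
have Smw : Sm R m i (ew K w) = plc m i (take i w) (S R (ew K t)) (drop (i + N) w).
  by rewrite SmE sum_ew eseq_ew.
case: (Sw_cases t) => [E|[f [fR lmf E]]].
  by left; rewrite Smw S_ew E -eseq_ew -ew_plc.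
right => w'; rewrite Smw S_ew E ffunE.
case: ifP => [/andP[/eqP A /eqP B]|]; last by rewrite eqxx.
have hs' : size (take N (drop i (val w'))) == N by apply/eqP; apply: size_mid.
rewrite (_ : take N (drop i w') = val (Tuple hs')) // feval_tuple.
set t' := Tuple hs' => nz.
have tt : t' != t.
  apply: contra nz => /eqP ->; rewrite !ffunE eqxx (lead1 fR lmf) subrr.
  by [].
have ft : f t' != 0.
  by apply: contra nz => /eqP f0; rewrite !ffunE f0 (negbTE tt) subrr.
have lt : lexlt t' t.
  have /andP[_ /forallP /(_ t')] := lmf; rewrite ft /= (negbTE tt) //.
have e1 : val w' = take i w ++ val t' ++ drop (i + N) w by rewrite -A -B /= -split3.
have e2 : val w = take i w ++ val t ++ drop (i + N) w by rewrite /= -split3.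
by rewrite e1 e2; apply: lexlt_mid; rewrite // !size_tuple.
Qed.

End SOp.

Lemma lN_SS N n : lN N n.+2 = (lN N n + N)%N.
Proof. rewrite /lN /= negbK mulSn; lia. Qed.

Unset Implicit Arguments.

Theorem lemma4p1p3 (K : fieldType) (d : Order.disp_t) (X : finOrderType d)
    (N : nat) (R : seq {ffun N.-tuple X -> K^o}) :
  (2 <= N)%N -> reduced_presentation R ->
  (forall n m : nat, (lN N n.+2 <= m)%N ->
     F1 R n m = bigmeet [seq Sm R m i | i <- iota 0 (m - lN N n.+2).+1])
  /\
  (forall n m : nat, (1 <= n)%N -> (lN N n.+1 <= m)%N ->
     F2 R n m = bigjoin [seq Sm R m i | i <- iota (m - lN N n.+1) (lN N n.+1 - N).+1]).
Proof.
move=> N2 rp; split.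
  move=> n m hm; rewrite lN_SS in hm *.
  set k := (m - (lN N n + N))%N.
  set j := (m - lN N n)%N.
  have hj : (N <= j)%N by lia.
  have hk : (j - N)%N = k by lia.
  rewrite /F1 (_ : [seq Sm R m i | i <- iota 0 k.+1] = Sm R m 0 :: [seq Sm R m i | i <- iota 1 k]) //.
  rewrite bigmeet_eq; last by apply: red_Sm => //; lia.
  congr theta_inv.
  rewrite -[Sm R m 0 :: _]/([seq Sm R m i | i <- iota 0 k.+1]) big_map.
  rewrite /IR ifN; last by rewrite -leqNgt.
  rewrite -(big_mkord xpredT (fun i => place (m - lN N n) i (Rbar R))) /index_iota subn0 place_sum hk.
  apply: eq_big_seq => i; rewrite mem_iota add0n ltnS => /andP[_ ik].
  rewrite lker_Sm //; last by lia.
  rewrite place_nest //; lia.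
move=> n m hn hm.
have hL : (N <= lN N n.+1)%N by case: n hn hm => [//|n] _ _; rewrite lN_SS; lia.
set L := lN N n.+1 in hL hm *.
set a := (m - L)%N.
rewrite /F2 ifN; last by rewrite -leqNgt.
rewrite (_ : [seq Sm R m i | i <- iota a (L - N).+1] = Sm R m a :: [seq Sm R m i | i <- iota a.+1 (L - N)]) //.
rewrite bigjoin_eq; last by apply: red_Sm => //; lia.
congr theta_inv.
rewrite -[Sm R m a :: _]/([seq Sm R m i | i <- iota a (L - N).+1]) big_map.
rewrite /J ifN; last by rewrite -ltnNge ltnS.
rewrite -(big_mkord xpredT (fun i => place L i (Rbar R))) /index_iota subn0 place_cap; last by lia.
rewrite -[a]addn0 iotaDl big_map /a /L.
apply: eq_big_seq => i; rewrite mem_iota add0n ltnS => /andP[_ ik].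
rewrite lker_Sm //; last by lia.
rewrite place_nest //; lia.
Qed.
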